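(* Let $\mathbb G=V_1\times V_2$ be a step-two Carnot group with $\dim V_2=3$. Then $\mathcal A(V_1\times V_2)\subsetneq\mathcal A_h(\mathbb G)$ if and only if $\mathbb G$ is isomorphic to the direct product $\mathbb F_3\times\mathbb R^d$ for some integer $d\geq0$.
   Context: A step-two Carnot group is $\mathbb G=V_1\times V_2$ ($V_1,V_2$ finite-dimensional real vector spaces, $V_2\ne\{0\}$) with a bilinear skew-symmetric $[\cdot,\cdot]:V_1\times V_1\to V_2$ whose image spans $V_2$, and group law $(x,z)\cdot(x',z')=(x+x',z+z'+[x,x'])$. $\mathcal A_h(\mathbb G)$ is the space of maps $f:\mathbb G\to\mathbb R$ such that for all $(x,z)\in\mathbb G$, $y\in V_1$, $t\mapsto f((x,z)\cdot(ty,0))$ is affine; $\mathcal A(V_1\times V_2)$ is the space of maps affine in the usual sense. $\mathbb F_3=\Lambda^1(\mathbb R^3)\times\Lambda^2(\mathbb R^3)$ with bracket $[\theta,\theta']=\theta\wedge\theta'$; $\mathbb F_3\times\mathbb R^d$ is $(\Lambda^1(\mathbb R^3)\oplus\mathbb R^d)\times\Lambda^2(\mathbb R^3)$ with bracket $[\theta+u,\theta'+u']:=\theta\wedge\theta'$. Two step-two Carnot groups are isomorphic if there is a bijective Carnot morphism between them, where a Carnot morphism is $\pi(x,z)=(\pi_1(x),\pi_2(z))$ with $\pi_1,\pi_2$ linear and $\pi_2([x,y])=[\pi_1(x),\pi_1(y)]'$. *)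

(* Defs.v *)
From HB Require Import structures.
From mathcomp Require Import all_boot all_order all_algebra.
From mathcomp Require Import reals.
Set Implicit Arguments. Unset Strict Implicit. Unset Printing Implicit Defensive.
Import Order.TTheory GRing.Theory Num.Theory.
Local Open Scope ring_scope.

(* A step-two Carnot group structure on V1 x V2 with V1 = 'rV[R]_n and
   V2 = 'rV[R]_m (finite-dimensional real vector spaces, fixed bases):
   a bilinear skew-symmetric bracket whose image spans V2. *)
Definition bilinear_bracket (R : realType) (n m : nat)
  (br : 'rV[R]_n -> 'rV[R]_n -> 'rV[R]_m) : Prop :=
  (forall (a : R) (x y z : 'rV[R]_n), br (a *: x + y) z = a *: br x z + br y z) /\
  (forall (a : R) (x y z : 'rV[R]_n), br z (a *: x + y) = a *: br z x + br z y).

Definition skew_bracket (R : realType) (n m : nat)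
  (br : 'rV[R]_n -> 'rV[R]_n -> 'rV[R]_m) : Prop :=
  forall x y, br x y = - br y x.

Definition bracket_spans (R : realType) (n m : nat)
  (br : 'rV[R]_n -> 'rV[R]_n -> 'rV[R]_m) : Prop :=
  forall z : 'rV[R]_m, exists (k : nat) (c : 'I_k -> R) (xs ys : 'I_k -> 'rV[R]_n),
    z = \sum_(i < k) c i *: br (xs i) (ys i).

Definition step_two_carnot (R : realType) (n m : nat)
  (br : 'rV[R]_n -> 'rV[R]_n -> 'rV[R]_m) : Prop :=
  (0 < m)%N /\ bilinear_bracket br /\ skew_bracket br /\ bracket_spans br.

Definition carnot_mul (R : realType) (n m : nat)
  (br : 'rV[R]_n -> 'rV[R]_n -> 'rV[R]_m)
  (p q : 'rV[R]_n * 'rV[R]_m) : 'rV[R]_n * 'rV[R]_m :=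
  (p.1 + q.1, p.2 + q.2 + br p.1 q.1).

Definition affine_R (R : realType) (g : R -> R) : Prop :=
  exists a b : R, forall t, g t = a + b * t.

(* A_h(G): f affine along every horizontal line t |-> p.(t y, 0) *)
Definition horiz_affine (R : realType) (n m : nat)
  (br : 'rV[R]_n -> 'rV[R]_n -> 'rV[R]_m)
  (f : 'rV[R]_n * 'rV[R]_m -> R) : Prop :=
  forall (p : 'rV[R]_n * 'rV[R]_m) (y : 'rV[R]_n),
    affine_R (fun t => f (carnot_mul br p (t *: y, 0))).

(* A(V1 x V2): affine maps in the usual sense (constant + linear form) *)
Definition affine_map (R : realType) (n m : nat)
  (f : 'rV[R]_n * 'rV[R]_m -> R) : Prop :=
  exists (c : R) (a : 'cV[R]_n) (b : 'cV[R]_m),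
    forall x z, f (x, z) = c + (x *m a) 0 0 + (z *m b) 0 0.

(* F_3 x R^d: V1 = Lambda^1(R^3) (+) R^d = 'rV_(3+d) (first 3 coordinates in
   the basis e1,e2,e3 of Lambda^1), V2 = Lambda^2(R^3) = 'rV_3 in the basis
   e1^e2, e1^e3, e2^e3; bracket [th+u, th'+u'] = th ^ th'. *)
Definition wedge3 (R : realType) (u v : 'rV[R]_3) : 'rV[R]_3 :=
  \row_(k < 3)
    (if val k == 0%N then u 0 0 * v 0 1 - u 0 1 * v 0 0
     else if val k == 1%N then u 0 0 * v 0 2 - u 0 2 * v 0 0
     else u 0 1 * v 0 2 - u 0 2 * v 0 1).

Definition F3Rd_bracket (R : realType) (d : nat)
  (x y : 'rV[R]_(3 + d)) : 'rV[R]_3 :=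
  wedge3 (lsubmx x) (lsubmx y).

Definition carnot_isomorphic (R : realType) (n m n' m' : nat)
  (br : 'rV[R]_n -> 'rV[R]_n -> 'rV[R]_m)
  (br' : 'rV[R]_n' -> 'rV[R]_n' -> 'rV[R]_m') : Prop :=
  exists (P1 : 'M[R]_(n, n')) (P2 : 'M[R]_(m, m')),
    (forall x y, br x y *m P2 = br' (x *m P1) (y *m P1)) /\
    bijective (fun p : 'rV[R]_n * 'rV[R]_m => (p.1 *m P1, p.2 *m P2)).

(* Main.v *)
Require Import Defs.
From HB Require Import structures.
From mathcomp Require Import all_boot all_order all_algebra.
From mathcomp Require Import reals.
From mathcomp Require Import boolp.
From mathcomp Require Import ring lra.
Set Implicit Arguments. Unset Strict Implicit. Unset Printing Implicit Defensive.
Import Order.TTheory GRing.Theory Num.Theory.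
Local Open Scope ring_scope.

Ltac fld := field; rewrite ?pnatr_eq0 ?oner_neq0 //=.

Section Heis.
Variable R : realType.

Lemma affE (h : R -> R) : affine_R h -> forall r, h r = h 0 + r * (h 1 - h 0).
Proof. by case=> a [b Hb] r; rewrite !Hb; ring. Qed.

Lemma affI (h : R -> R) : (forall r, h r = h 0 + r * (h 1 - h 0)) -> affine_R h.
Proof. by move=> H; exists (h 0); exists (h 1 - h 0); move=> r; rewrite {1}H; ring. Qed.

Lemma affD (h1 h2 : R -> R) : affine_R h1 -> affine_R h2 -> affine_R (fun r => h1 r + h2 r).
Proof. by case=> a [b H] [c [d K]]; exists (a + c); exists (b + d) => r; rewrite H K; ring. Qed.

Lemma affZ (h : R -> R) (k : R) : affine_R h -> affine_R (fun r => k * h r).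
Proof. by case=> a [b H]; exists (k * a); exists (k * b) => r; rewrite H; ring. Qed.

Lemma affN (h : R -> R) : affine_R h -> affine_R (fun r => - h r).
Proof. by case=> a [b H]; exists (- a); exists (- b) => r; rewrite H; ring. Qed.

Lemma aff_scale (h : R -> R) (k : R) : affine_R h -> affine_R (fun r => h (k * r)).
Proof. by case=> a [b H]; exists a; exists (b * k) => r; rewrite H; ring. Qed.

Lemma aff_shift (h : R -> R) (k : R) : affine_R h -> affine_R (fun r => h (k + r)).
Proof. by case=> a [b H]; exists (a + b * k); exists b => r; rewrite H; ring. Qed.

Lemma aff2 (h : R -> R) : affine_R h -> h 0 - 2 * h 1 + h 2 = 0.
Proof. by case=> a [b H]; rewrite !H; ring. Qed.

Lemma aff_ext (h1 h2 : R -> R) : (forall r, h1 r = h2 r) -> affine_R h1 -> affine_R h2.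
Proof. by move=> E [a [b H]]; exists a; exists b => r; rewrite -E. Qed.

Variable g : R -> R -> R -> R.
Hypothesis Hg : forall s0 t0 c0 l m,
  affine_R (fun r => g (s0 + r * l) (t0 + r * m) (c0 + r * (s0 * m - t0 * l))).

Lemma HgE s0 t0 c0 l m r s t c s1 t1 c1 :
  s = s0 + r * l -> t = t0 + r * m -> c = c0 + r * (s0 * m - t0 * l) ->
  s1 = s0 + l -> t1 = t0 + m -> c1 = c0 + (s0 * m - t0 * l) ->
  g s t c = g s0 t0 c0 + r * (g s1 t1 c1 - g s0 t0 c0).
Proof.
move=> -> -> -> -> -> ->.
have := affE (Hg s0 t0 c0 l m) r => /= ->.
by rewrite !mul0r !addr0 !mul1r.
Qed.

Let gam c := g 0 0 c.
Let kk c m := g 1 m c - gam c.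

Lemma g_rad s t c : s != 0 -> g s t c = gam c + s * kk c (t / s).
Proof.
move=> s0; rewrite /kk /gam (@HgE 0 0 c 1 (t / s) s s t c 1 (t / s) c) //.
- by rewrite add0r mulr1.
- by rewrite add0r mulrC divfK.
- by rewrite !mul0r subrr mulr0 addr0.
- by rewrite add0r.
- by rewrite add0r.
- by rewrite !mul0r subrr addr0.
Qed.

Lemma g_vert (sig t0 c0 : R) : sig != 0 ->
  affine_R (fun r => gam (c0 + r * sig) + sig * kk (c0 + r * sig) ((t0 + r) / sig)) /\
  affine_R (fun r => gam (c0 + r * sig) - sig * kk (c0 + r * sig) ((t0 + r) / sig)).
Proof.
move=> s0; split.
- apply: aff_ext (Hg sig t0 c0 0 1) => r /=.
  have -> : g (sig + r * 0) (t0 + r * 1) (c0 + r * (sig * 1 - t0 * 0))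
     = g sig (t0 + r) (c0 + r * sig) by congr g; ring.
  by rewrite g_rad.
- apply: aff_ext (Hg (- sig) (- t0) c0 0 (-1)) => r /=.
  have -> : g (- sig + r * 0) (- t0 + r * -1) (c0 + r * (- sig * -1 - - t0 * 0))
     = g (- sig) (- t0 - r) (c0 + r * sig) by congr g; ring.
  rewrite g_rad ?oppr_eq0 //.
  have -> : (- t0 - r) / - sig = (t0 + r) / sig by field.
  ring.
Qed.

Lemma gam_aff : forall c, gam c = gam 0 + c * (gam 1 - gam 0).
Proof.
have [H1 H2] := g_vert 0 0 (oner_neq0 R).
have := affD H1 H2 => /= H.
have H' : affine_R (fun r => gam (0 + r * 1)) by
  apply: aff_ext (affZ (1/2) H) => r /=; field.
move=> c; have := affE H' c => /=.
by rewrite ?(add0r, mulr1, mul0r, mul1r).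
Qed.

Lemma kk_dir (sig : R) u0 m0 : sig != 0 ->
  affine_R (fun rho => kk (u0 + sig ^+ 2 * rho) (m0 + rho)).
Proof.
move=> s0.
have [H1 H2] := g_vert (sig * m0) u0 s0.
have H : affine_R (fun r => kk (u0 + r * sig) ((sig * m0 + r) / sig)).
  apply: aff_ext (affZ (1 / (2 * sig)) (affD H1 (affN H2))) => r /=; field; exact: s0.
apply: aff_ext (aff_scale sig H) => rho /=.
by congr kk; fld.
Qed.

Lemma kk_aff : exists k0 k1 k2, forall u m, kk u m = k0 + k1 * u + k2 * m.
Proof.
pose K a b := kk (a + 4 * b) (a + b).
have HA : forall b, affine_R (fun a => K a b).
  move=> b; apply: aff_ext (kk_dir (4 * b) b (oner_neq0 R)) => a /=.
  by rewrite /K expr1n mul1r addrC [b + a]addrC.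
have HB : forall a, affine_R (fun b => K a b).
  move=> a; have h2 : (2:R) != 0 by rewrite pnatr_eq0.
  apply: aff_ext (kk_dir a a h2) => b /=.
  by rewrite /K; congr kk; ring.
have KE : forall a b, K a b = K 0 0 + a * (K 1 0 - K 0 0) + b * (K 0 1 - K 0 0)
      + a * b * (K 1 1 - K 1 0 - K 0 1 + K 0 0).
  move=> a b; rewrite (affE (HA b) a) /=.
  rewrite (affE (HB 0) b) (affE (HB 1) b) /=; ring.
set e := K 1 1 - K 1 0 - K 0 1 + K 0 0.
have h3 : (3:R) != 0 by rewrite pnatr_eq0.
have e0 : e = 0.
  have H3 : affine_R (fun rho => K (- (5/3) * rho) ((8/3) * rho)).
    by apply: aff_ext (kk_dir 0 0 h3) => rho /=; rewrite /K; congr kk; fld.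
  have := aff2 H3 => /=.
  rewrite (KE (- (5/3) * 0) ((8/3) * 0)) (KE (- (5/3) * 1) ((8/3) * 1))
    (KE (- (5/3) * 2) ((8/3) * 2)) -/e => H.
  have : e * (80 / 9) = 0 by rewrite -oppr0 -H; fld.
  by move/eqP; rewrite mulf_eq0 => /orP [/eqP //| ]; rewrite mulf_eq0 invr_eq0 !pnatr_eq0.
exists (K 0 0).
exists ((K 1 0 - K 0 0) * (-1/3) + (K 0 1 - K 0 0) * (1/3)).
exists ((K 1 0 - K 0 0) * (4/3) + (K 0 1 - K 0 0) * (-1/3)).
move=> u m.
have -> : kk u m = K ((4 * m - u) / 3) ((u - m) / 3) by rewrite /K; congr kk; fld.
rewrite KE -/e e0; fld.
Qed.

Lemma heis_affine : exists k0 k1 k2 k3, forall s t c, g s t c = k0 + k1 * s + k2 * t + k3 * c.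
Proof.
have [k0 [k1 [k2 KE]]] := kk_aff.
set g0 := gam 0; set g1 := gam 1 - gam 0.
have Gs : forall s t c, s != 0 -> g s t c = g0 + g1 * c + k0 * s + k1 * (s * c) + k2 * t.
  move=> s t c s0; rewrite g_rad // KE gam_aff -/g0 -/g1; field; exact: s0.
have k1z : k1 = 0.
  have H : g 3 1 (-2) = g 1 1 0 + 2 * (g 2 1 (-1) - g 1 1 0) by apply: (@HgE 1 1 0 1 0 2); ring.
  rewrite !Gs ?pnatr_eq0 ?oner_neq0 // in H; lra.
exists g0; exists k0; exists k2; exists g1 => s t c.
have [->|s0] := eqVneq s 0; last by rewrite Gs // k1z; ring.
have H : g 0 t c = g 2 t (c - 2 * t) + 2 * (g 1 t (c - t) - g 2 t (c - 2 * t)).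
  by apply: (@HgE 2 t (c - 2 * t) (-1) 0); ring.
rewrite H !Gs ?pnatr_eq0 ?oner_neq0 // k1z; ring.
Qed.

End Heis.

Section Geo3.
Variable R : realType.
Implicit Types u v w z m p q r : 'rV[R]_3.

Definition dot3 u v : R := u 0 0 * v 0 0 + u 0 1 * v 0 1 + u 0 2 * v 0 2.
Definition cross3 u v : 'rV[R]_3 := \row_(k < 3)
  (if val k == 0%N then u 0 1 * v 0 2 - u 0 2 * v 0 1
   else if val k == 1%N then u 0 2 * v 0 0 - u 0 0 * v 0 2
   else u 0 0 * v 0 1 - u 0 1 * v 0 0).
Definition det3 u v w := dot3 (cross3 u v) w.
Definition mk3 (a b c : R) : 'rV[R]_3 :=
  \row_(k < 3) (if val k == 0%N then a else if val k == 1%N then b else c).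

Lemma row3_eq u v : u 0 0 = v 0 0 -> u 0 1 = v 0 1 -> u 0 2 = v 0 2 -> u = v.
Proof.
move=> h0 h1 h2; apply/rowP => i; rewrite [0 : 'I_1](_ : _ = ord0) //.
case: i => [[|[|[|i]]] Hi] //.
- by rewrite (_ : Ordinal Hi = 0) //; apply: val_inj.
- by rewrite (_ : Ordinal Hi = 1) //; apply: val_inj.
- by rewrite (_ : Ordinal Hi = 2) //; apply: val_inj.
Qed.

Ltac w3 := apply: row3_eq; rewrite /det3 /dot3 /cross3 /mk3 ?mxE /=; ring.
Ltac s3 := rewrite /det3 /dot3 /cross3 /mk3 ?mxE /=; ring.

Lemma mk3_0 a b c : (mk3 a b c) 0 0 = a. Proof. by rewrite mxE. Qed.
Lemma mk3_1 a b c : (mk3 a b c) 0 1 = b. Proof. by rewrite mxE. Qed.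
Lemma mk3_2 a b c : (mk3 a b c) 0 2 = c. Proof. by rewrite mxE. Qed.
Lemma mk3E u : u = mk3 (u 0 0) (u 0 1) (u 0 2). Proof. w3. Qed.

Lemma dot3C u v : dot3 u v = dot3 v u. Proof. s3. Qed.
Lemma dot3Dl u v w : dot3 (u + v) w = dot3 u w + dot3 v w. Proof. s3. Qed.
Lemma dot3Dr u v w : dot3 w (u + v) = dot3 w u + dot3 w v. Proof. s3. Qed.
Lemma dot3Zl a u w : dot3 (a *: u) w = a * dot3 u w. Proof. s3. Qed.
Lemma dot3Zr a u w : dot3 w (a *: u) = a * dot3 w u. Proof. s3. Qed.
Lemma dot3Nr u w : dot3 w (- u) = - dot3 w u. Proof. s3. Qed.
Lemma dot3Nl u w : dot3 (- u) w = - dot3 u w. Proof. s3. Qed.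
Lemma dot30r w : dot3 w 0 = 0. Proof. s3. Qed.
Lemma dot30l w : dot3 0 w = 0. Proof. s3. Qed.
Lemma cross3Dl u v w : cross3 (u + v) w = cross3 u w + cross3 v w. Proof. w3. Qed.
Lemma cross3Dr u v w : cross3 w (u + v) = cross3 w u + cross3 w v. Proof. w3. Qed.
Lemma cross3Zl a u w : cross3 (a *: u) w = a *: cross3 u w. Proof. w3. Qed.
Lemma cross3Zr a u w : cross3 w (a *: u) = a *: cross3 w u. Proof. w3. Qed.
Lemma cross3Nl u w : cross3 (- u) w = - cross3 u w. Proof. w3. Qed.
Lemma cross3Nr u w : cross3 w (- u) = - cross3 w u. Proof. w3. Qed.
Lemma cross3C u v : cross3 u v = - cross3 v u. Proof. w3. Qed.
Lemma cross3uu u : cross3 u u = 0. Proof. w3. Qed.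
Lemma det3_cyc u v w : det3 u v w = det3 v w u. Proof. s3. Qed.
Lemma det3_swap u v w : det3 u v w = - det3 v u w. Proof. s3. Qed.
Lemma det3_swap23 u v w : det3 u v w = - det3 u w v. Proof. s3. Qed.

Lemma cramer u v w z :
  det3 u v w *: z = dot3 z (cross3 v w) *: u + dot3 z (cross3 w u) *: v + dot3 z (cross3 u v) *: w.
Proof. w3. Qed.

Lemma cramer_dual u v w z :
  det3 u v w *: z = dot3 u z *: cross3 v w + dot3 v z *: cross3 w u + dot3 w z *: cross3 u v.
Proof. w3. Qed.

Lemma plane_decomp u v w :
  dot3 (cross3 u v) (cross3 u v) *: w = det3 u v w *: cross3 u v
    + dot3 (cross3 w v) (cross3 u v) *: u + dot3 (cross3 u w) (cross3 u v) *: v.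
Proof. w3. Qed.

Lemma cauchy_binet b1 b2 b3 n1 n2 n3 :
  det3 (mk3 (dot3 b1 n1) (dot3 b1 n2) (dot3 b1 n3))
       (mk3 (dot3 b2 n1) (dot3 b2 n2) (dot3 b2 n3))
       (mk3 (dot3 b3 n1) (dot3 b3 n2) (dot3 b3 n3)) = det3 b1 b2 b3 * det3 n1 n2 n3.
Proof. s3. Qed.

Lemma dot3_self_eq0 m : dot3 m m = 0 -> m = 0.
Proof.
rewrite /dot3 -!expr2 => H.
have p0 := sqr_ge0 (m 0 0); have p1 := sqr_ge0 (m 0 1); have p2 := sqr_ge0 (m 0 2).
have h0 : m 0 0 = 0 by apply/eqP; rewrite -sqrf_eq0; apply/eqP; lra.
have h1 : m 0 1 = 0 by apply/eqP; rewrite -sqrf_eq0; apply/eqP; lra.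
have h2 : m 0 2 = 0 by apply/eqP; rewrite -sqrf_eq0; apply/eqP; lra.
by apply: row3_eq; rewrite ?mxE.
Qed.

Lemma dot3_all0 m : (forall z, dot3 m z = 0) -> m = 0.
Proof. by move=> H; apply: dot3_self_eq0; apply: H. Qed.

Lemma cross3_all0 u : (forall z, cross3 u z = 0) -> u = 0.
Proof.
move=> H.
have h1 := H (mk3 1 0 0); have h2 := H (mk3 0 1 0).
have a1 : (cross3 u (mk3 1 0 0)) 0 1 = 0 by rewrite h1 mxE.
have a2 : (cross3 u (mk3 1 0 0)) 0 2 = 0 by rewrite h1 mxE.
have a3 : (cross3 u (mk3 0 1 0)) 0 2 = 0 by rewrite h2 mxE.
move: a1 a2 a3; rewrite /cross3 /mk3 !mxE /= => a1 a2 a3.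
apply: row3_eq; rewrite mxE; [move: a3 | move: a2 | move: a1]; rewrite ?mxE; lra.
Qed.

Lemma cross3_trans p q r : q != 0 -> cross3 q p = 0 -> cross3 q r = 0 -> cross3 p r = 0.
Proof.
move=> q0 hp hr.
have Nq : dot3 q q != 0 by apply/eqP => /dot3_self_eq0; apply/eqP.
have E : forall x, dot3 q q *: x = dot3 q x *: q - cross3 q (cross3 q x) by move=> x; w3.
apply: (scalerI Nq); rewrite scaler0 -cross3Zl E hp.
have -> : cross3 q 0 = 0 by w3.
by rewrite subr0 cross3Zl hr scaler0.
Qed.

Lemma det3_cross_par u v w : cross3 u w = 0 -> det3 u v w = 0.
Proof. by move=> H; rewrite det3_cyc det3_cyc /det3 cross3C H oppr0 dot30l. Qed.

Definition affW (h : 'rV[R]_3 -> R) := exists e bv, forall z, h z = e + dot3 bv z.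

Lemma affW_ext h1 h2 : (forall z, h1 z = h2 z) -> affW h1 -> affW h2.
Proof. by move=> E [e [bv H]]; exists e; exists bv => z; rewrite -E. Qed.

Lemma affW_add h1 h2 : affW h1 -> affW h2 -> affW (fun z => h1 z + h2 z).
Proof.
move=> [e1 [b1 H1]] [e2 [b2 H2]]; exists (e1 + e2); exists (b1 + b2) => z.
by rewrite H1 H2 dot3Dl; ring.
Qed.

Lemma affW_scale c h : affW h -> affW (fun z => c * h z).
Proof.
move=> [e [b H]]; exists (c * e); exists (c *: b) => z.
by rewrite H dot3Zl; ring.
Qed.

Lemma affW_const k : affW (fun _ => k).
Proof. by exists k; exists 0 => z; rewrite dot30l addr0. Qed.

Lemma affW_basis u v w h e0 e1 e2 e3 : det3 u v w != 0 ->
  (forall s t c, h (s *: u + t *: v + c *: w) = e0 + e1 * s + e2 * t + e3 * c) -> affW h.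
Proof.
move=> Dnz H; set D := det3 u v w.
exists e0; exists ((e1 / D) *: cross3 v w + (e2 / D) *: cross3 w u + (e3 / D) *: cross3 u v) => z.
have zE : z = (dot3 z (cross3 v w) / D) *: u + (dot3 z (cross3 w u) / D) *: v
            + (dot3 z (cross3 u v) / D) *: w.
  apply: (scalerI Dnz); rewrite cramer !scalerDr !scalerA.
  by rewrite !(mulrC D) !divfK.
have -> : h z = h ((dot3 z (cross3 v w) / D) *: u + (dot3 z (cross3 w u) / D) *: v
            + (dot3 z (cross3 u v) / D) *: w) by rewrite -zE.
rewrite H !dot3Dl !dot3Zl (dot3C _ z) (dot3C (cross3 w u) z) (dot3C (cross3 u v) z).
ring.
Qed.

Lemma quad_pert u v w u' v' : det3 u v w != 0 ->
  exists e : R, e != 0 /\ det3 (u + e *: u') (v + e *: v') w != 0.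
Proof.
move=> Dnz.
have I : det3 u v w = 3 * det3 (u + 1 *: u') (v + 1 *: v') w
   - 3 * det3 (u + 2 *: u') (v + 2 *: v') w + det3 (u + 3 *: u') (v + 3 *: v') w by s3.
have [h1|h1] := eqVneq (det3 (u + 1 *: u') (v + 1 *: v') w) 0; last first.
  by exists 1; split; [exact: oner_neq0 | exact: h1].
have [h2|h2] := eqVneq (det3 (u + 2 *: u') (v + 2 *: v') w) 0; last first.
  by exists 2; split => //; rewrite pnatr_eq0.
have [h3|h3] := eqVneq (det3 (u + 3 *: u') (v + 3 *: v') w) 0; last first.
  by exists 3; split => //; rewrite pnatr_eq0.
exfalso; move: Dnz; rewrite I h1 h2 h3 => /eqP; apply; ring.
Qed.

Lemma cubic_pert u v w u' v' w' : det3 u v w != 0 ->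
  exists e : R, e != 0 /\ det3 (u + e *: u') (v + e *: v') (w + e *: w') != 0.
Proof.
move=> Dnz.
pose q (e : R) := det3 (u + e *: u') (v + e *: v') (w + e *: w').
have I : det3 u v w = 4 * q 1 - 6 * q 2 + 4 * q 3 - q 4 by rewrite /q; s3.
have [h1|h1] := eqVneq (q 1) 0; last by exists 1; split; [exact: oner_neq0 | exact: h1].
have [h2|h2] := eqVneq (q 2) 0; last by exists 2; split => //; rewrite pnatr_eq0.
have [h3|h3] := eqVneq (q 3) 0; last by exists 3; split => //; rewrite pnatr_eq0.
have [h4|h4] := eqVneq (q 4) 0; last by exists 4; split => //; rewrite pnatr_eq0.
exfalso; move: Dnz; rewrite I h1 h2 h3 h4 => /eqP; apply; ring.
Qed.

Lemma dot3_mx bv z : dot3 bv z = (z *m bv^T) 0 0.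
Proof.
rewrite /dot3 !mxE !big_ord_recr big_ord0 /= add0r !mxE.
rewrite (_ : widen_ord _ (widen_ord _ ord_max) = 0); last by apply: val_inj.
rewrite (_ : widen_ord _ ord_max = 1); last by apply: val_inj.
rewrite (_ : ord_max = 2); last by apply: val_inj.
ring.
Qed.

Lemma cramer_ex u v w : det3 u v w != 0 -> forall z, exists s t c, z = s *: u + t *: v + c *: w.
Proof.
move=> Dnz z; set D := det3 u v w.
exists (dot3 z (cross3 v w) / D); exists (dot3 z (cross3 w u) / D); exists (dot3 z (cross3 u v) / D).
apply: (scalerI Dnz); rewrite cramer !scalerDr !scalerA.
by rewrite !(mulrC D) !divfK.
Qed.

Lemma cross3_0r u : cross3 u 0 = 0. Proof. w3. Qed.
Lemma det3Zm u v w k : det3 u (k *: v) w = k * det3 u v w. Proof. s3. Qed.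
Lemma det3Dm u v v' w : det3 u (v + v') w = det3 u v w + det3 u v' w. Proof. s3. Qed.
Lemma det3uu u w : det3 u u w = 0. Proof. s3. Qed.
Lemma mk3_100_neq0 : mk3 1 0 0 != 0 :> 'rV[R]_3.
Proof. apply/eqP => H; have := congr1 (fun z => z 0 0) H; rewrite /= !mxE /=; apply/eqP; exact: oner_neq0. Qed.

End Geo3.

Ltac vecn := apply/rowP => i; rewrite !mxE; ring.

Section Bracket.
Variable R : realType.
Variable n : nat.
Variable br : 'rV[R]_n -> 'rV[R]_n -> 'rV[R]_3.
Hypothesis Hbil : bilinear_bracket br.
Hypothesis Hskew : skew_bracket br.
Implicit Types x y a b : 'rV[R]_n.

Lemma brDl x y z : br (x + y) z = br x z + br y z.
Proof. by have := Hbil.1 1 x y z; rewrite !scale1r. Qed.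
Lemma brDr x y z : br z (x + y) = br z x + br z y.
Proof. by have := Hbil.2 1 x y z; rewrite !scale1r. Qed.
Lemma br0l z : br 0 z = 0.
Proof. have H := brDl 0 0 z; rewrite addr0 in H; apply: (addrI (br 0 z)); by rewrite addr0 -H. Qed.
Lemma br0r z : br z 0 = 0.
Proof. have H := brDr 0 0 z; rewrite addr0 in H; apply: (addrI (br z 0)); by rewrite addr0 -H. Qed.
Lemma brZl c x z : br (c *: x) z = c *: br x z.
Proof. by have := Hbil.1 c x 0 z; rewrite !addr0 br0l addr0. Qed.
Lemma brZr c x z : br z (c *: x) = c *: br z x.
Proof. by have := Hbil.2 c x 0 z; rewrite !addr0 br0r addr0. Qed.
Lemma brNl x z : br (- x) z = - br x z.
Proof. by rewrite -scaleN1r brZl scaleN1r. Qed.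
Lemma brNr x z : br z (- x) = - br z x.
Proof. by rewrite -scaleN1r brZr scaleN1r. Qed.
Lemma brC x y : br x y = - br y x.
Proof. exact: Hskew. Qed.
Lemma brxx x : br x x = 0.
Proof.
have H := Hskew x x.
have : (2 : R) *: br x x = 0 by rewrite scaler_nat mulr2n {1}H addNr.
by move/eqP; rewrite scaler_eq0 pnatr_eq0 /= => /eqP.
Qed.

End Bracket.


Section Haff.
Variable R : realType.
Variable n : nat.
Variable br : 'rV[R]_n -> 'rV[R]_n -> 'rV[R]_3.
Hypothesis Hbil : bilinear_bracket br.
Hypothesis Hskew : skew_bracket br.
Variable f : 'rV[R]_n * 'rV[R]_3 -> R.
Hypothesis Hf : horiz_affine br f.
Implicit Types x y a b : 'rV[R]_n.

Local Notation brDl := (brDl Hbil).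
Local Notation brDr := (brDr Hbil).
Local Notation brZl := (brZl Hbil).
Local Notation brZr := (brZr Hbil).
Local Notation brNl := (brNl Hbil).
Local Notation brNr := (brNr Hbil).
Local Notation br0l := (br0l Hbil).
Local Notation br0r := (br0r Hbil).
Local Notation brxx := (brxx Hskew).
Ltac brn := repeat first [rewrite brDl | rewrite brDr | rewrite brZl | rewrite brZr
  | rewrite brNl | rewrite brNr | rewrite brxx | rewrite br0l | rewrite br0r].
Local Notation brC := (brC Hskew).

Lemma C1 x0 z0 a b : exists k0 k1 k2 k3, forall s t c,
  f (x0 + (s *: a + t *: b), z0 + c *: br a b + br x0 (s *: a + t *: b))
   = k0 + k1 * s + k2 * t + k3 * c.
Proof.
apply: (@heis_affine R (fun s t c =>
  f (x0 + (s *: a + t *: b), z0 + c *: br a b + br x0 (s *: a + t *: b)))).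
move=> s0 t0 c0 l m.
apply: aff_ext (Hf (x0 + (s0 *: a + t0 *: b), z0 + c0 *: br a b + br x0 (s0 *: a + t0 *: b))
   (l *: a + m *: b)) => r /=.
rewrite /carnot_mul /=; congr f; congr (_, _); first by vecn.
brn; rewrite ?(brC b a); vecn.
Qed.

Definition F0 z := f (0, z).
Definition ell z x := f (x, z) - f (0, z).

Lemma fxE x z : f (x, z) = F0 z + ell z x.
Proof. by rewrite /ell /F0; ring. Qed.

Lemma Cdir x z a b : affine_R (fun c => f (x, z + c *: br a b)).
Proof.
have [k0 [k1 [k2 [k3 K]]]] := C1 x z a b.
exists k0; exists k3 => c; have := K 0 0 c.
have -> : (x + (0 *: a + 0 *: b), z + c *: br a b + br x (0 *: a + 0 *: b))
   = (x, z + c *: br a b) by congr (_, _); [vecn | brn; vecn].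
by move=> ->; ring.
Qed.

Lemma ell_lin z a b s t : ell z (s *: a + t *: b) = s * ell z a + t * ell z b.
Proof.
have [k0 [k1 [k2 [k3 K]]]] := C1 0 z a b.
have E : forall s t, f (s *: a + t *: b, z) = k0 + k1 * s + k2 * t.
  move=> s' t'; have := K s' t' 0.
  have -> : (0 + (s' *: a + t' *: b), z + 0 *: br a b + br 0 (s' *: a + t' *: b))
     = (s' *: a + t' *: b, z) by congr (_, _); [vecn | brn; vecn].
  by move=> ->; ring.
have Ea := E 1 0; have Eb := E 0 1; have E0 := E 0 0.
rewrite (_ : 1 *: a + 0 *: b = a) in Ea; last by vecn.
rewrite (_ : 0 *: a + 1 *: b = b) in Eb; last by vecn.
rewrite (_ : 0 *: a + 0 *: b = 0) in E0; last by vecn.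
by rewrite /ell E Ea Eb E0; ring.
Qed.

Lemma ell_add z x y : ell z (x + y) = ell z x + ell z y.
Proof. by have := ell_lin z x y 1 1; rewrite !scale1r !mul1r. Qed.

Lemma ell_scale z c x : ell z (c *: x) = c * ell z x.
Proof. by have := ell_lin z x x c 0; rewrite scale0r addr0 mul0r addr0. Qed.

Lemma ell0 z : ell z 0 = 0.
Proof. by rewrite /ell subrr. Qed.

Lemma Ldir z y a b : affine_R (fun c => ell (z + c *: br a b) y).
Proof. exact: aff_ext (affD (Cdir y z a b) (affN (Cdir 0 z a b))). Qed.

Lemma inv1 x y z : ell (z + br x y) y = ell z y.
Proof.
have HA : affine_R (fun t => f (x + t *: y, z + t *: br x y)).
  apply: aff_ext (Hf (x, z) y) => t /=; rewrite /carnot_mul /=.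
  by congr f; congr (_, _); brn; vecn.
have HB : affine_R (fun t => t * ell (z + t *: br x y) y).
  apply: aff_ext (affD HA (affN (Cdir x z x y))) => t /=.
  by rewrite fxE ell_add ell_scale [f (x, _)]fxE; ring.
have HQ := affE (Ldir z y x y) 2.
have := aff2 HB; rewrite /= HQ scale1r scale0r addr0 => H.
have : ell (z + br x y) y - ell z y = 0 by rewrite -[RHS](mulr0 (1/2)) -H; field.
by move/eqP; rewrite subr_eq0 => /eqP.
Qed.

Lemma inv x y z c : ell (z + c *: br x y) y = ell z y.
Proof. by rewrite -brZl inv1. Qed.

Lemma inv' x y z c : ell (z + c *: br y x) y = ell z y.
Proof. by rewrite (_ : br y x = br (- x) y) ?inv // brNl -brC. Qed.

Lemma bprime x z a b : exists k0 k1 k2, forall s t,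
  F0 (z + br x (s *: a + t *: b)) = k0 + k1 * s + k2 * t.
Proof.
have [k0 [k1 [k2 [k3 K]]]] := C1 x z a b.
exists (k0 - ell z x); exists (k1 - ell z a); exists (k2 - ell z b) => s t.
set Y := s *: a + t *: b.
have E := K s t 0; rewrite -/Y scale0r addr0 fxE ell_add in E.
have I1 : ell (z + br x Y) x = ell z x by rewrite -[br x Y]scale1r inv'.
have I2 : ell (z + br x Y) Y = ell z Y by rewrite -[br x Y]scale1r inv.
rewrite I1 I2 /Y ell_lin -/Y in E.
have -> : F0 (z + br x Y) = k0 + k1 * s + k2 * t + k3 * 0
   - (ell z x + (s * ell z a + t * ell z b)) by rewrite -E; ring.
ring.
Qed.



Lemma lin_rep (phi : 'rV[R]_n -> R) : (forall x y, phi (x + y) = phi x + phi y) ->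
  (forall c x, phi (c *: x) = c * phi x) -> exists col : 'cV[R]_n, forall x, phi x = (x *m col) 0 0.
Proof.
move=> HD HZ; exists (\col_i phi (delta_mx 0 i)) => x.
have H0 : phi 0 = 0 by rewrite -(scale0r (0 : 'rV[R]_n)) HZ mul0r.
rewrite {1}(row_sum_delta x) (big_morph phi HD H0) mxE.
by apply: eq_bigr => i _; rewrite HZ mxE.
Qed.

Lemma f_affine_of : affW F0 -> (forall z x, ell z x = ell 0 x) -> affine_map f.
Proof.
move=> [e [bv HF]] Hl.
have [col Hc] := @lin_rep (ell 0) (ell_add 0) (ell_scale 0).
exists e; exists col; exists bv^T => x z.
by rewrite fxE HF Hl Hc dot3_mx; ring.
Qed.

Lemma ellZ_x0 x0 a b z0 s t c :
  ell (z0 + (s *: br x0 a + t *: br x0 b + c *: br a b)) x0 = ell (z0 + c *: br a b) x0.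
Proof.
have -> : z0 + (s *: br x0 a + t *: br x0 b + c *: br a b)
   = z0 + c *: br a b + s *: br x0 a + t *: br x0 b by vecn.
by rewrite inv' inv'.
Qed.

Lemma ellZ_a x0 a b z0 s t c :
  ell (z0 + (s *: br x0 a + t *: br x0 b + c *: br a b)) a = ell (z0 + t *: br x0 b) a.
Proof.
have -> : z0 + (s *: br x0 a + t *: br x0 b + c *: br a b)
   = z0 + t *: br x0 b + s *: br x0 a + c *: br a b by vecn.
by rewrite inv' inv.
Qed.

Lemma ellZ_b x0 a b z0 s t c :
  ell (z0 + (s *: br x0 a + t *: br x0 b + c *: br a b)) b = ell (z0 + s *: br x0 a) b.
Proof.
have -> : z0 + (s *: br x0 a + t *: br x0 b + c *: br a b)
   = z0 + s *: br x0 a + t *: br x0 b + c *: br a b by vecn.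
by rewrite inv inv.
Qed.

Lemma F0Z x0 a b z0 : exists e0 e1 e2 e3, forall s t c,
  F0 (z0 + (s *: br x0 a + t *: br x0 b + c *: br a b)) = e0 + e1 * s + e2 * t + e3 * c.
Proof.
have [k0 [k1 [k2 [k3 K]]]] := C1 x0 z0 a b.
have [g0 [g1 G]] := Ldir z0 x0 a b.
have [al0 [al1 A]] := Ldir z0 a x0 b.
have [be0 [be1 B]] := Ldir z0 b x0 a.
have FE : forall s t c, F0 (z0 + (s *: br x0 a + t *: br x0 b + c *: br a b))
   = k0 + k1 * s + k2 * t + k3 * c - (g0 + g1 * c) - s * (al0 + al1 * t) - t * (be0 + be1 * s).
  move=> s t c; have := K s t c; rewrite fxE.
  rewrite (_ : z0 + c *: br a b + br x0 (s *: a + t *: b)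
     = z0 + (s *: br x0 a + t *: br x0 b + c *: br a b)); last by brn; vecn.
  rewrite !ell_add !ell_scale ellZ_x0 ellZ_a ellZ_b G A B => E.
  by rewrite -E; ring.
have [m0 [m1 [m2 M]]] := bprime x0 z0 a b.
have FM : forall s t, F0 (z0 + (s *: br x0 a + t *: br x0 b + 0 *: br a b)) = m0 + m1 * s + m2 * t.
  by move=> s t; rewrite -M; congr F0; brn; vecn.
have Hab : al1 + be1 = 0.
  have := FM 1 1; have := FM 1 0; have := FM 0 1; have := FM 0 0.
  rewrite !FE => E1 E2 E3 E4; lra.
exists (k0 - g0); exists (k1 - al0); exists (k2 - be0); exists (k3 - g1) => s t c.
rewrite FE; have -> : be1 = - al1 by lra.
ring.
Qed.

Definition goodT x0 a b := det3 (br x0 a) (br x0 b) (br a b) != 0.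

Lemma good_F0 x0 a b : goodT x0 a b -> affW F0.
Proof.
move=> Dnz; have [e0 [e1 [e2 [e3 E]]]] := F0Z x0 a b 0.
by apply: (affW_basis (e0 := e0) (e1 := e1) (e2 := e2) (e3 := e3) Dnz) => s t c; rewrite -E add0r.
Qed.

Lemma good_ell x0 a b : goodT x0 a b -> affW (fun z => ell z x0).
Proof.
move=> Dnz; have [g0 [g1 G]] := Ldir 0 x0 a b.
apply: (affW_basis (e0 := g0) (e1 := 0) (e2 := 0) (e3 := g1) Dnz) => s t c.
by rewrite -[_ + _ + _]add0r ellZ_x0 G; ring.
Qed.

Lemma det3Nl (u v w : 'rV[R]_3) : det3 (- u) v w = - det3 u v w.
Proof. by rewrite /det3 cross3Nl dot3Nl. Qed.

Lemma good_swap x0 a b : goodT x0 a b -> goodT a x0 b.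
Proof.
by rewrite /goodT => H; rewrite (brC a x0) det3Nl oppr_eq0 det3_swap23 oppr_eq0.
Qed.

Lemma good_ell_all x0 a b : goodT x0 a b -> forall y, affW (fun z => ell z y).
Proof.
move=> Dnz y.
have [e [e0 He]] := quad_pert (br y a) (br y b) Dnz.
have G2 : goodT (x0 + e *: y) a b by rewrite /goodT !brDl !brZl.
have H1 := good_ell G2; have H0 := good_ell Dnz.
apply: (affW_ext (h1 := fun z => (1 / e) * (ell z (x0 + e *: y) + (-1) * ell z x0))).
  by move=> z /=; rewrite ell_add ell_scale; field.
by apply: affW_scale; apply: affW_add => //; apply: affW_scale.
Qed.
Definition Bf y z := ell z y - ell 0 y.

Lemma Bf_addl y1 y2 z : Bf (y1 + y2) z = Bf y1 z + Bf y2 z.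
Proof. by rewrite /Bf !ell_add; ring. Qed.

Lemma Bf_scalel c y z : Bf (c *: y) z = c * Bf y z.
Proof. by rewrite /Bf !ell_scale; ring. Qed.

Lemma Bf_kill x y : Bf y (br x y) = 0.
Proof. by rewrite /Bf -[br x y]scale1r -[_ *: _]add0r inv subrr. Qed.

Lemma good_Bf x0 a b : goodT x0 a b -> forall y, exists bv, forall z, Bf y z = dot3 bv z.
Proof.
move=> G y; have [e [bv H]] := good_ell_all G y.
by exists bv => z; rewrite /Bf !H dot30r; ring.
Qed.

Lemma good_nonaff x0 a b : goodT x0 a b -> ~ affine_map f -> exists y0 z0, Bf y0 z0 != 0.
Proof.
move=> G NA.
have [[y0 [z0 H]]|N] := pselect (exists y0 z0, Bf y0 z0 != 0); first by exists y0; exists z0.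
exfalso; apply: NA; apply: f_affine_of; first exact: good_F0 G.
move=> z x; have : Bf x z == 0.
  by case: eqP => // H; exfalso; apply: N; exists x; exists z; apply/eqP.
by rewrite /Bf subr_eq0 => /eqP.
Qed.

Lemma plane3 (phi : 'rV[R]_n -> R) :
  (forall a b, exists k0 k1 k2, forall s t, phi (s *: a + t *: b) = k0 + k1 * s + k2 * t) ->
  forall b c d s t r, phi (s *: b + t *: c + r *: d)
     = phi 0 + s * (phi b - phi 0) + t * (phi c - phi 0) + r * (phi d - phi 0).
Proof.
move=> H.
have P2 : forall a b s t, phi (s *: a + t *: b) = phi 0 + s * (phi a - phi 0) + t * (phi b - phi 0).
  move=> a b s t; have [k0 [k1 [k2 K]]] := H a b.
  have E0 := K 0 0; have Ea := K 1 0; have Eb := K 0 1.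
  rewrite (_ : 0 *: a + 0 *: b = 0) in E0; last by vecn.
  rewrite (_ : 1 *: a + 0 *: b = a) in Ea; last by vecn.
  rewrite (_ : 0 *: a + 1 *: b = b) in Eb; last by vecn.
  by rewrite K E0 Ea Eb; ring.
move=> b c d s t r.
rewrite (_ : s *: b + t *: c + r *: d = 1 *: (s *: b + t *: c) + r *: d); last by vecn.
by rewrite P2 P2; ring.
Qed.

Lemma r3_ellx x b c d : det3 (br x b) (br x c) (br x d) != 0 -> forall z, ell z x = ell 0 x.
Proof.
move=> Dnz z; have [s [t [r ->]]] := cramer_ex Dnz z.
rewrite (_ : s *: br x b + t *: br x c + r *: br x d = 0 + 1 *: br x (s *: b + t *: c + r *: d)).
  by rewrite inv'.
by brn; vecn.
Qed.

Lemma r3_affine x b c d : det3 (br x b) (br x c) (br x d) != 0 -> affine_map f.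
Proof.
move=> Dnz; apply: f_affine_of.
  pose phi y := F0 (0 + br x y).
  have Hp : forall a b, exists k0 k1 k2, forall s t, phi (s *: a + t *: b) = k0 + k1 * s + k2 * t.
    by move=> a b'; apply: bprime.
  apply: (affW_basis (e0 := phi 0) (e1 := phi b - phi 0) (e2 := phi c - phi 0)
      (e3 := phi d - phi 0) Dnz) => s t r.
  rewrite (_ : s *: br x b + t *: br x c + r *: br x d = 0 + br x (s *: b + t *: c + r *: d)).
    by rewrite -/(phi _) (plane3 Hp); ring.
  by brn; vecn.
move=> z y.
have [e [e0 He]] := cubic_pert (br y b) (br y c) (br y d) Dnz.
have D2 : det3 (br (x + e *: y) b) (br (x + e *: y) c) (br (x + e *: y) d) != 0.
  by rewrite !brDl !brZl.
have H1 := r3_ellx D2 z; have H0 := r3_ellx Dnz z.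
move: H1; rewrite !ell_add !ell_scale H0 => H1.
apply: (mulfI e0); lra.
Qed.

End Haff.

Section Span.
Variable R : realType.
Variable n : nat.
Variable br : 'rV[R]_n -> 'rV[R]_n -> 'rV[R]_3.
Hypothesis Hbil : bilinear_bracket br.
Hypothesis Hskew : skew_bracket br.
Hypothesis Hspan : bracket_spans br.
Implicit Types x y a b c d : 'rV[R]_n.

Local Notation brDl := (brDl Hbil).
Local Notation brDr := (brDr Hbil).
Local Notation brZl := (brZl Hbil).
Local Notation brZr := (brZr Hbil).
Local Notation brNl := (brNl Hbil).
Local Notation brNr := (brNr Hbil).
Local Notation br0l := (br0l Hbil).
Local Notation br0r := (br0r Hbil).
Local Notation brxx := (brxx Hskew).
Local Notation brC := (brC Hskew).

Lemma span_dot (m : 'rV[R]_3) : (forall p q, dot3 m (br p q) = 0) -> m = 0.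
Proof.
move=> H; apply: dot3_all0 => z; have [k [cf [xs [ys ->]]]] := Hspan z.
rewrite (big_morph (dot3 m) (fun u v => dot3Dr u v m) (dot30r m)).
by apply: big1 => i _; rewrite dot3Zr H mulr0.
Qed.

Lemma span_cross (u : 'rV[R]_3) : (forall p q, cross3 u (br p q) = 0) -> u = 0.
Proof.
move=> H; apply: cross3_all0 => z; have [k [cf [xs [ys ->]]]] := Hspan z.
rewrite (big_morph (cross3 u) (fun v w => cross3Dr v w u) (cross3_0r u)).
by apply: big1 => i _; rewrite cross3Zr H scaler0.
Qed.

Hypothesis NG : forall x a b, det3 (br x a) (br x b) (br a b) = 0.
Hypothesis NR : forall x b c d, det3 (br x b) (br x c) (br x d) = 0.

Lemma step1_gen x a b c : cross3 (br x a) (br x b) != 0 ->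
  dot3 (cross3 (br x a) (br x b)) (cross3 (br x a) (br x c)) != 0 ->
  dot3 (cross3 (br x a) (br x b)) (br a c) = 0.
Proof.
set u := br x a; set v := br x b; set w := br x c; set m := cross3 u v.
move=> m0 g0.
have N0 : dot3 m m != 0 by apply/eqP => /dot3_self_eq0; apply/eqP.
have PD := plane_decomp u v w; rewrite -/m (NR x a b c) scale0r add0r in PD.
have E : dot3 m m * det3 u w (br a c) = dot3 (cross3 u w) m * dot3 m (br a c).
  rewrite -det3Zm PD det3Dm !det3Zm det3uu mulr0 add0r /det3 -/m.
  by rewrite dot3C.
move: E; rewrite (NG x a c) mulr0 => /esym /eqP; rewrite mulf_eq0 dot3C.
by case/orP => /eqP // H; move: g0; rewrite H eqxx.
Qed.

Lemma step1 x a b c : cross3 (br x a) (br x b) != 0 ->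
  dot3 (cross3 (br x a) (br x b)) (br a c) = 0.
Proof.
move=> m0.
have [g0|g0] := eqVneq (dot3 (cross3 (br x a) (br x b)) (cross3 (br x a) (br x c))) 0; last first.
  exact: step1_gen.
have H := @step1_gen x a b (c + b) m0.
have Hb : dot3 (cross3 (br x a) (br x b)) (br a b) = 0 by rewrite -/(det3 _ _ _) NG.
move: H; rewrite !brDr cross3Dr dot3Dr g0 add0r dot3Dr Hb addr0 => H; apply: H.
by apply/eqP => /dot3_self_eq0; apply/eqP.
Qed.

Lemma caseI x a b : cross3 (br x a) (br x b) != 0 -> False.
Proof.
set u := br x a; set v := br x b; set m := cross3 u v => m0.
have N0 : dot3 m m != 0 by apply/eqP => /dot3_self_eq0; apply/eqP.
suff : m = 0 by move/eqP; rewrite (negbTE m0).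
apply: span_dot => c d.
set N := dot3 m m; set g1 := dot3 (cross3 (br x c) v) m.
have PD := plane_decomp u v (br x c); rewrite -/m (NR x a b c) scale0r add0r -/N -/g1 in PD.
pose a' := N *: c + (N - g1) *: a.
have Ea : br x a' = N *: u + dot3 (cross3 u (br x c)) m *: v.
  by rewrite /a' brDr !brZr PD -/u; vecn.
have Cm : cross3 (br x a') (br x b) = N *: m.
  by rewrite Ea cross3Dl !cross3Zl -/v cross3uu scaler0 addr0.
have H := @step1 x a' b d; rewrite Cm in H.
have H2 : dot3 m (br a' d) = 0.
  have : N * dot3 m (br a' d) = 0 by rewrite -dot3Zl H // scaler_eq0 negb_or N0.
  by move/eqP; rewrite mulf_eq0 (negbTE N0) => /eqP.
move: H2; rewrite /a' brDl !brZl dot3Dr !dot3Zr (step1 d m0) -/u -/v -/m mulr0 addr0.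
by move/eqP; rewrite mulf_eq0 (negbTE N0) => /eqP.
Qed.

Lemma caseII : (forall x a b, cross3 (br x a) (br x b) = 0) -> False.
Proof.
move=> Hpar.
have [[x [a ua]] | N] := pselect (exists x a, br x a != 0); last first.
  have : mk3 1 0 0 = 0 :> 'rV[R]_3.
    apply: span_dot => p q; have : br p q == 0.
      by case: eqP => // H; exfalso; apply: N; exists p; exists q; apply/eqP.
    by move/eqP => ->; rewrite dot30r.
  by move/eqP; rewrite (negbTE (@mk3_100_neq0 R)).
suff : br x a = 0 by move/eqP; rewrite (negbTE ua).
apply: span_cross => c d; set u := br x a.
have [cx|cx] := eqVneq (br x c) 0; last first.
  apply: (@cross3_trans _ _ (br x c)) => //.
    by rewrite Hpar.
  by have := Hpar c x d; rewrite (brC c x) cross3Nl => /eqP; rewrite oppr_eq0 => /eqP.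
have [ac|ac] := eqVneq (br a c) 0; last first.
  apply: (@cross3_trans _ _ (br a c)) => //.
    by have := Hpar a c x; rewrite (brC a x) cross3Nr => /eqP; rewrite oppr_eq0 => /eqP.
  by have := Hpar c a d; rewrite (brC c a) cross3Nl => /eqP; rewrite oppr_eq0 => /eqP.
have := Hpar (c + x) a d.
rewrite !brDl (brC c a) ac oppr0 add0r cross3Dr -/u.
by rewrite (Hpar x a d) addr0.
Qed.

Lemma no_good_no_r3 : False.
Proof.
have [[x [a [b H]]] | N] := pselect (exists x a b, cross3 (br x a) (br x b) != 0).
  exact: caseI H.
apply: caseII => x a b; apply/eqP; case: eqP => // H; exfalso; apply: N.
by exists x; exists a; exists b; apply/eqP.
Qed.

End Span.

Section Rows3.
Variable R : realType.

Definition rows3 k (r0 r1 r2 : 'rV[R]_k) : 'M[R]_(3, k) :=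
  \matrix_(i < 3, j < k) (if val i == 0%N then r0 0 j else if val i == 1%N then r1 0 j else r2 0 j).

Lemma rows3_row k (r0 r1 r2 : 'rV[R]_k) (i : 'I_3) :
  row i (rows3 r0 r1 r2) = if val i == 0%N then r0 else if val i == 1%N then r1 else r2.
Proof. by apply/rowP => j; rewrite !mxE; case: ifP => _ //; case: ifP. Qed.

Lemma rows3_mul k l (r0 r1 r2 : 'rV[R]_k) (M : 'M[R]_(k, l)) :
  rows3 r0 r1 r2 *m M = rows3 (r0 *m M) (r1 *m M) (r2 *m M).
Proof.
apply/row_matrixP => i; rewrite row_mul !rows3_row.
by case: ifP => _ //; case: ifP.
Qed.

Lemma rows3_id : rows3 (mk3 1 0 0) (mk3 0 1 0) (mk3 0 0 1) = 1%:M.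
Proof.
apply/row_matrixP => i; rewrite rows3_row row1.
case: i => [[|[|[|i]]] Hi] //=; apply: row3_eq; rewrite !mxE //=.
Qed.

Lemma vmul3 k (v : 'rV[R]_3) (r0 r1 r2 : 'rV[R]_k) :
  v *m rows3 r0 r1 r2 = v 0 0 *: r0 + v 0 1 *: r1 + v 0 2 *: r2.
Proof.
rewrite mulmx_sum_row !big_ord_recr big_ord0 /= add0r !rows3_row /=.
rewrite (_ : widen_ord _ (widen_ord _ ord_max) = 0); last by apply: val_inj.
rewrite (_ : widen_ord _ ord_max = 1); last by apply: val_inj.
by rewrite (_ : ord_max = 2); last by apply: val_inj.
Qed.

End Rows3.

Section Iso.
Variable R : realType.
Variable n : nat.
Variable br : 'rV[R]_n -> 'rV[R]_n -> 'rV[R]_3.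
Hypothesis Hbil : bilinear_bracket br.
Hypothesis Hskew : skew_bracket br.
Implicit Types x y u : 'rV[R]_n.

Local Notation brDl := (brDl Hbil).
Local Notation brDr := (brDr Hbil).
Local Notation brZl := (brZl Hbil).
Local Notation brZr := (brZr Hbil).
Local Notation brNl := (brNl Hbil).
Local Notation brNr := (brNr Hbil).
Local Notation br0l := (br0l Hbil).
Local Notation br0r := (br0r Hbil).
Local Notation brxx := (brxx Hskew).
Local Notation brC := (brC Hskew).
Ltac brn := repeat first [rewrite brDl | rewrite brDr | rewrite brZl | rewrite brZr
  | rewrite brNl | rewrite brNr | rewrite brxx | rewrite br0l | rewrite br0r].

Variable Bf : 'rV[R]_n -> 'rV[R]_3 -> R.
Hypothesis BDl : forall y1 y2 z, Bf (y1 + y2) z = Bf y1 z + Bf y2 z.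
Hypothesis BZl : forall c y z, Bf (c *: y) z = c * Bf y z.
Hypothesis Brep : forall y, exists bv, forall z, Bf y z = dot3 bv z.
Hypothesis Bkill : forall x y, Bf y (br x y) = 0.

Lemma BDr y z1 z2 : Bf y (z1 + z2) = Bf y z1 + Bf y z2.
Proof. by have [bv H] := Brep y; rewrite !H dot3Dr. Qed.
Lemma BZr y c z : Bf y (c *: z) = c * Bf y z.
Proof. by have [bv H] := Brep y; rewrite !H dot3Zr. Qed.
Lemma BNr y z : Bf y (- z) = - Bf y z.
Proof. by rewrite -scaleN1r BZr; ring. Qed.
Lemma BNl y z : Bf (- y) z = - Bf y z.
Proof. by rewrite -scaleN1r BZl; ring. Qed.
Lemma B0r y : Bf y 0 = 0.
Proof. by rewrite -(scale0r (0 : 'rV[R]_3)) BZr mul0r. Qed.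
Lemma BBl y1 y2 z : Bf (y1 - y2) z = Bf y1 z - Bf y2 z.
Proof. by rewrite BDl BNl. Qed.

Definition T x y u := Bf y (br x u).

Lemma T23 x y u : T x y u = - T x u y.
Proof.
have := Bkill x (y + u); rewrite brDr BDl !BDr !Bkill /T => H.
by apply/eqP; rewrite -subr_eq0 opprK; apply/eqP; rewrite -[RHS]H; ring.
Qed.
Lemma T13 x y u : T x y u = - T u y x.
Proof. by rewrite /T brC BNr. Qed.
Lemma T12 x y u : T x y u = - T y x u.
Proof. by rewrite T13 T23 opprK T13. Qed.
Lemma Txxu x u : T x x u = 0.
Proof. have := T12 x x u; lra. Qed.
Lemma Txuu x u : T x u u = 0.
Proof. have := T23 x u u; lra. Qed.
Lemma Txux x u : T x u x = 0.
Proof. have := T13 x u x; lra. Qed.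

Lemma T_lin1 x1 x2 c y u : T (x1 + c *: x2) y u = T x1 y u + c * T x2 y u.
Proof. by rewrite /T brDl brZl BDr BZr. Qed.
Lemma T_lin2 x y1 y2 c u : T x (y1 + c *: y2) u = T x y1 u + c * T x y2 u.
Proof. by rewrite /T BDl BZl. Qed.
Lemma T_lin3 x y u1 u2 c : T x y (u1 + c *: u2) = T x y u1 + c * T x y u2.
Proof. by rewrite /T brDr brZr BDr BZr. Qed.

Variables a1 a2 a3 : 'rV[R]_n.
Hypothesis Tnz : T a1 a2 a3 != 0.
Variables b1 b2 b3 : 'rV[R]_3.
Hypothesis Hb1 : forall z, Bf a1 z = dot3 b1 z.
Hypothesis Hb2 : forall z, Bf a2 z = dot3 b2 z.
Hypothesis Hb3 : forall z, Bf a3 z = dot3 b3 z.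

Let tau := T a1 a2 a3.
Definition al1 x := T x a2 a3 / tau.
Definition al2 x := T a1 x a3 / tau.
Definition al3 x := T a1 a2 x / tau.
Let n12 := br a1 a2.
Let n13 := br a1 a3.
Let n23 := br a2 a3.

Lemma dets_nz : det3 b1 b2 b3 != 0 /\ det3 n12 n13 n23 != 0.
Proof.
have CB := cauchy_binet b1 b2 b3 n12 n13 n23.
rewrite -!Hb1 -!Hb2 -!Hb3 /n12 /n13 /n23 in CB.
rewrite -!/(T _ _ _) in CB.
rewrite !Txxu !Txuu (T12 a2 a1 a3) (T23 a1 a3 a2) -/tau in CB.
have E : det3 (mk3 0 0 (- tau)) (mk3 0 tau 0) (mk3 (- tau) 0 0) = - tau ^+ 3.
  by rewrite /det3 /dot3 /cross3 /mk3 !mxE /=; ring.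
rewrite E in CB.
have : det3 b1 b2 b3 * det3 (br a1 a2) (br a1 a3) (br a2 a3) != 0.
  by rewrite -CB oppr_eq0 expf_neq0.
by rewrite mulf_eq0 negb_or => /andP [].
Qed.

Definition kx x := x - (al1 x *: a1 + al2 x *: a2 + al3 x *: a3).

Lemma Bf_k x w : Bf (kx x) w = 0.
Proof.
have [_ Nd] := dets_nz.
have [s [t [c ->]]] := cramer_ex Nd w.
rewrite !BDr !BZr /kx !BBl !BDl !BZl.
rewrite /n12 /n13 /n23 -!/(T _ _ _).
rewrite ?Txxu ?Txuu ?Txux (T23 a1 a3 a2) (T12 a2 a1 a3) -/tau.
rewrite (T23 a1 x a2) (T12 a2 x a3).
rewrite /al1 /al2 /al3 -/tau.
field; exact: Tnz.
Qed.

Lemma br_k x u : br (kx x) u = 0.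
Proof.
have [Bd _] := dets_nz.
apply: (scalerI Bd); rewrite scaler0 cramer_dual.
rewrite -Hb1 -Hb2 -Hb3 -!/(T _ _ _) !(T12 (kx x)) /T !Bf_k oppr0 !scale0r !addr0.
by [].
Qed.

Lemma xdec x : x = al1 x *: a1 + al2 x *: a2 + al3 x *: a3 + kx x.
Proof. by rewrite /kx addrC subrK. Qed.

Lemma br_formula x y : br x y =
  (al1 x * al2 y - al2 x * al1 y) *: n12 + (al1 x * al3 y - al3 x * al1 y) *: n13
  + (al2 x * al3 y - al3 x * al2 y) *: n23.
Proof.
rewrite {1}(xdec x) {1}(xdec y).
move: (br_k x) (br_k y); move: (kx x) (kx y) => k1 k2 Hk1 Hk2.
rewrite brDl !brDr !Hk1 (brC _ k2) !Hk2 oppr0 !addr0.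
brn.
rewrite (brC a2 a1) (brC a3 a1) (brC a3 a2) /n12 /n13 /n23.
vecn.
Qed.

Lemma al1D x y : al1 (x + y) = al1 x + al1 y.
Proof. by rewrite /al1 /T brDl BDr mulrDl. Qed.
Lemma al1Z c x : al1 (c *: x) = c * al1 x.
Proof. by rewrite /al1 /T brZl BZr mulrA. Qed.
Lemma al2D x y : al2 (x + y) = al2 x + al2 y.
Proof. by rewrite /al2 /T BDl mulrDl. Qed.
Lemma al2Z c x : al2 (c *: x) = c * al2 x.
Proof. by rewrite /al2 /T BZl mulrA. Qed.
Lemma al3D x y : al3 (x + y) = al3 x + al3 y.
Proof. by rewrite /al3 /T brDr BDr mulrDl. Qed.
Lemma al3Z c x : al3 (c *: x) = c * al3 x.
Proof. by rewrite /al3 /T brZr BZr mulrA. Qed.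

Lemma Amat_ex : exists A : 'M[R]_(n, 3), forall x, x *m A = mk3 (al1 x) (al2 x) (al3 x).
Proof.
have [c1 H1] := lin_rep al1D al1Z.
have [c2 H2] := lin_rep al2D al2Z.
have [c3 H3] := lin_rep al3D al3Z.
exists (rows3 c1^T c2^T c3^T)^T => x.
apply: row3_eq; rewrite ?mk3_0 ?mk3_1 ?mk3_2 ?H1 ?H2 ?H3 !mxE;
  by apply: eq_bigr => i _; rewrite !mxE.
Qed.

Lemma al_vals : [/\ al1 a1 = 1, al2 a1 = 0, al3 a1 = 0,
  [/\ al1 a2 = 0, al2 a2 = 1 & al3 a2 = 0] & [/\ al1 a3 = 0, al2 a3 = 0 & al3 a3 = 1]].
Proof.
by rewrite /al1 /al2 /al3 -/tau ?Txxu ?Txuu ?Txux ?mul0r divff.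
Qed.

Lemma iso_exists : exists d, carnot_isomorphic br (@F3Rd_bracket R d).
Proof.
have [A HA] := Amat_ex.
have [v1 v2 v3 [v4 v5 v6] [v7 v8 v9]] := al_vals.
have rfA : row_full A.
  apply/row_fullP; exists (rows3 a1 a2 a3).
  by rewrite rows3_mul !HA v1 v2 v3 v4 v5 v6 v7 v8 v9 rows3_id.
have rAT : \rank A^T = 3 by rewrite mxrank_tr; apply/eqP.
set d := \rank (A^T^C)%MS.
set C := (row_base (A^T^C)%MS)^T.
set P1 := row_mx A C.
have rP1 : \rank P1 = n.
  rewrite -mxrank_tr /P1 /C tr_row_mx trmxK -addsmxE.
  rewrite (adds_eqmx (eqmx_refl _) (eq_row_base _)).
  by apply/eqP; exact: addsmx_compl_full.
have n3 : (3 <= n)%N by have := rank_leq_col A^T; rewrite rAT.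
have dE : d = (n - 3)%N by rewrite /d mxrank_compl rAT.
have rfree : row_free P1 by rewrite /row_free rP1.
have rfull : row_full P1 by rewrite /row_full rP1 mxrank_compl rAT subnKC.
have [Q HQ] := row_freeP rfree.
have [Q' HQ'] := row_fullP rfull.
have QQ : Q' = Q by rewrite -[Q']mulmx1 -HQ mulmxA HQ' mul1mx.
rewrite QQ in HQ'.
have [_ Nd] := dets_nz.
pose Nmat := rows3 n12 n13 n23.
have Nunit : Nmat \in unitmx.
  rewrite -row_full_unit; apply/row_fullP.
  have [s0 [t0 [c0 E0]]] := cramer_ex Nd (mk3 1 0 0).
  have [s1 [t1 [c1 E1]]] := cramer_ex Nd (mk3 0 1 0).
  have [s2 [t2 [c2 E2]]] := cramer_ex Nd (mk3 0 0 1).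
  exists (rows3 (mk3 s0 t0 c0) (mk3 s1 t1 c1) (mk3 s2 t2 c2)).
  by rewrite rows3_mul !vmul3 !mk3_0 !mk3_1 !mk3_2 -E0 -E1 -E2 rows3_id.
exists d; exists P1; exists (invmx Nmat); split.
  move=> x y; rewrite /F3Rd_bracket /P1 !mul_mx_row !row_mxKl !HA br_formula.
  have -> : (al1 x * al2 y - al2 x * al1 y) *: n12 + (al1 x * al3 y - al3 x * al1 y) *: n13
      + (al2 x * al3 y - al3 x * al2 y) *: n23
     = wedge3 (mk3 (al1 x) (al2 x) (al3 x)) (mk3 (al1 y) (al2 y) (al3 y)) *m Nmat.
    by rewrite /Nmat vmul3 /wedge3 !mxE /=.
  by rewrite -mulmxA mulmxV // mulmx1.
exists (fun q => (q.1 *m Q, q.2 *m Nmat)).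
  by case=> x z /=; rewrite -!mulmxA HQ mulVmx // !mulmx1.
by case=> u w /=; rewrite -!mulmxA HQ' mulmxV // !mulmx1.
Qed.

End Iso.

Section Forward.
Variable R : realType.
Variable n : nat.
Variable br : 'rV[R]_n -> 'rV[R]_n -> 'rV[R]_3.
Hypothesis Hbil : bilinear_bracket br.
Hypothesis Hskew : skew_bracket br.
Hypothesis Hspan : bracket_spans br.

Lemma iso_from_B (B : 'rV[R]_n -> 'rV[R]_3 -> R) :
  (forall y1 y2 z, B (y1 + y2) z = B y1 z + B y2 z) ->
  (forall c y z, B (c *: y) z = c * B y z) ->
  (forall y, exists bv, forall z, B y z = dot3 bv z) ->
  (forall x y, B y (br x y) = 0) ->
  (exists y0 z0, B y0 z0 != 0) ->
  exists d, carnot_isomorphic br (@F3Rd_bracket R d).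
Proof.
move=> BDl BZl Brep Bkill [y0 [z0 Bnz]].
have [[p [q Hpq]] | N] := pselect (exists p q, B y0 (br p q) != 0); last first.
  exfalso; move: Bnz; have [k [cf [xs [ys ->]]]] := Hspan z0.
  have [bv Hbv] := Brep y0.
  rewrite Hbv (big_morph (dot3 bv) (fun u v => dot3Dr u v bv) (dot30r bv)).
  rewrite big1 ?eqxx // => i _; rewrite dot3Zr -Hbv.
  have : B y0 (br (xs i) (ys i)) == 0.
    by case: eqP => // H; exfalso; apply: N; exists (xs i); exists (ys i); apply/eqP.
  by move/eqP => ->; rewrite mulr0.
have [b1 Hb1] := Brep p; have [b2 Hb2] := Brep y0; have [b3 Hb3] := Brep q.
exact: (@iso_exists R n br Hbil Hskew B BDl BZl Brep Bkill p y0 q Hpq b1 b2 b3 Hb1 Hb2 Hb3).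
Qed.

Lemma forward (f : 'rV[R]_n * 'rV[R]_3 -> R) : horiz_affine br f -> ~ affine_map f ->
  exists d, carnot_isomorphic br (@F3Rd_bracket R d).
Proof.
move=> Hf NA.
have [[x0 [a [b G]]] | NG] := pselect (exists x0 a b, goodT br x0 a b).
  apply: (@iso_from_B (Bf f)).
  - exact: (Bf_addl Hbil Hskew Hf).
  - exact: (Bf_scalel Hbil Hskew Hf).
  - exact: (good_Bf Hbil Hskew Hf G).
  - exact: (Bf_kill Hbil Hskew Hf).
  - exact: (good_nonaff Hbil Hskew Hf G NA).
have [[x [b [c [d H]]]] | NR] :=
  pselect (exists x b c d, det3 (br x b) (br x c) (br x d) != 0).
  by exfalso; apply: NA; exact: (r3_affine Hbil Hskew Hf H).
exfalso; apply: (no_good_no_r3 Hbil Hskew Hspan).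
  move=> x0 a b; apply/eqP; case: eqP => // H; exfalso; apply: NG.
  by exists x0; exists a; exists b; rewrite /goodT; apply/eqP.
move=> x b c d; apply/eqP; case: eqP => // H; exfalso; apply: NR.
by exists x; exists b; exists c; exists d; apply/eqP.
Qed.

End Forward.

Section Backward.
Variable R : realType.
Variable n : nat.
Variable br : 'rV[R]_n -> 'rV[R]_n -> 'rV[R]_3.
Hypothesis Hbil : bilinear_bracket br.

Lemma aff_is_haff (f : 'rV[R]_n * 'rV[R]_3 -> R) : affine_map f -> horiz_affine br f.
Proof.
move=> [c [a [b Hf]]] p y.
exists (c + (p.1 *m a) 0 0 + (p.2 *m b) 0 0).
exists ((y *m a) 0 0 + (br p.1 y *m b) 0 0) => t.
rewrite /carnot_mul /= Hf addr0 (brZr Hbil) !mulmxDl -!scalemxAl !mxE.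
ring.
Qed.

Definition vol (u w : 'rV[R]_3) : R := u 0 0 * w 0 2 - u 0 1 * w 0 1 + u 0 2 * w 0 0.

Lemma volE (X Y Z : 'rV[R]_3) t :
  vol (X + t *: Y) (Z + t *: wedge3 X Y) = vol X Z + vol Y Z * t.
Proof. rewrite /vol /wedge3 !mxE /=; ring. Qed.

Variable d : nat.
Variables (P1 : 'M[R]_(n, 3 + d)) (P2 : 'M[R]_(3, 3)).
Hypothesis HP : forall x y, br x y *m P2 = @F3Rd_bracket R d (x *m P1) (y *m P1).
Hypothesis Hbij : bijective (fun p : 'rV[R]_n * 'rV[R]_3 => (p.1 *m P1, p.2 *m P2)).

Definition fvol (p : 'rV[R]_n * 'rV[R]_3) := vol (lsubmx (p.1 *m P1)) (p.2 *m P2).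

Lemma fvol_haff : horiz_affine br fvol.
Proof.
move=> [x z] y /=.
exists (fvol (x, z)); exists (vol (lsubmx (y *m P1)) (z *m P2)) => t.
rewrite /fvol /carnot_mul /= addr0 (brZr Hbil).
have -> : lsubmx ((x + t *: y) *m P1) = lsubmx (x *m P1) + t *: lsubmx (y *m P1).
  by rewrite mulmxDl -scalemxAl; apply/rowP => i; rewrite !mxE.
rewrite mulmxDl -scalemxAl HP /F3Rd_bracket.
by rewrite volE; ring.
Qed.

Lemma fvol_nonaff : ~ affine_map fvol.
Proof.
case: Hbij => g gK Kg.
pose q1 := g (row_mx (mk3 1 0 0) (0 : 'rV[R]_d), 0).
pose q2 := g (0, mk3 0 0 1).
have E1 : q1.1 *m P1 = row_mx (mk3 1 0 0) 0 by rewrite /q1; have := Kg (row_mx (mk3 1 0 0) 0, 0) => /(congr1 fst).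
have E2 : q2.2 *m P2 = mk3 0 0 1 by rewrite /q2; have := Kg (0, mk3 0 0 1) => /(congr1 snd).
move=> [c [a [b Hf]]].
have L0 : lsubmx (0 : 'rV[R]_(3 + d)) = 0 by apply/rowP => i; rewrite !mxE.
have V00 : fvol (0, 0) = 0 by rewrite /fvol /= !mul0mx L0 /vol !mxE; ring.
have V10 : fvol (q1.1, 0) = 0 by rewrite /fvol /= E1 row_mxKl mul0mx /vol !mxE /=; ring.
have V01 : fvol (0, q2.2) = 0 by rewrite /fvol /= E2 mul0mx L0 /vol !mxE /=; ring.
have V11 : fvol (q1.1, q2.2) = 1 by rewrite /fvol /= E1 E2 row_mxKl /vol !mxE /=; ring.
have Z1 : ((0 : 'rV[R]_n) *m a) 0 0 = 0 by rewrite mul0mx mxE.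
have Z2 : ((0 : 'rV[R]_3) *m b) 0 0 = 0 by rewrite mul0mx mxE.
move: V00 V10 V01 V11; rewrite !Hf Z1 Z2 => V00 V10 V01 V11.
clear -V00 V10 V01 V11; lra.
Qed.

End Backward.

Unset Implicit Arguments.

Theorem proposition6p12 (R : realType) (n : nat)
  (br : 'rV[R]_n -> 'rV[R]_n -> 'rV[R]_3) :
  step_two_carnot br ->
  (((forall f : 'rV[R]_n * 'rV[R]_3 -> R, affine_map f -> horiz_affine br f) /\
    (exists f : 'rV[R]_n * 'rV[R]_3 -> R, horiz_affine br f /\ ~ affine_map f))
   <->
   (exists d : nat, carnot_isomorphic br (@F3Rd_bracket R d))).
Proof.
case=> _ [Hbil [Hskew Hspan]]; split.
  by case=> _ [f [Hf NA]]; exact: (forward Hbil Hskew Hspan Hf NA).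
case=> d [P1 [P2 [HP Hbij]]]; split.
  by move=> f; exact: aff_is_haff.
exists (fvol P1 P2); split.
  exact: (fvol_haff Hbil HP).
exact: (fvol_nonaff Hbij).
Qed.
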